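(* Let $\Gamma(V,E)$ be a finite undirected simple graph, let $V_1$ be the set of vertices of degree at least $1$, let $\Gamma^{(0)}=\Gamma(V\setminus V_1)$ be the induced subgraph on the isolated vertices, and let $\Gamma^{(1)},\dots,\Gamma^{(k)}$ be the connected components of the induced subgraph $\Gamma(V_1)$. For $i=0,1,\dots,k$ let $H^{(i)}=G_{\Gamma^{(i)}}\gamma_2(G_\Gamma)$, i.e. the subgroup of $G_\Gamma$ consisting of the elements $\prod_j (x^{(i)}_j)^{z_j}\prod_{l=1}^N y_l^{t_l}$ with $z_j,t_l\in\mathbb{Z}$, where $x^{(i)}_j$ runs over the vertices of $\Gamma^{(i)}$. Then for every automorphism $\varphi$ of $G_\Gamma$ there exists a unique permutation $\sigma\in S_k$ such that (i) $\varphi(H^{(i)})=H^{(\sigma(i))}$ for all $i=1,\dots,k$, and (ii) $\Gamma^{(i)}\cong\Gamma^{(\sigma(i))}$ for all $i=1,\dots,k$.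
   Context: For a finite undirected simple graph $\Gamma$ with vertex set $\{x_1,\dots,x_n\}$ and edge set $E$, the group $G_\Gamma$ is defined by the presentation with generators $x_1,\dots,x_n$ and $y_{i,j}$ for each pair $i<j$ with $x_ix_j\notin E$, and relations $[x_j,x_i]=1$ if $x_ix_j\in E$; $[x_j,x_i]=y_{i,j}$ if $x_ix_j\notin E$ and $i<j$; and $[x_l,y_{i,j}]=1$ for all $l$ and all such $y_{i,j}$. $N$ is the number of non-adjacent pairs, the $y_{i,j}$ are enumerated $y_1,\dots,y_N$, and $\gamma_2(G_\Gamma)=[G_\Gamma,G_\Gamma]$ is generated by them. $\Gamma(V')$ denotes the induced subgraph on $V'$, and for a subgraph $\Gamma'$ of $\Gamma$, $G_{\Gamma'}$ is viewed as the subgroup of $G_\Gamma$ generated by the vertices of $\Gamma'$. *)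

(* Defs.v *)
From mathcomp Require Import all_boot all_order all_algebra all_fingroup.
Set Implicit Arguments. Unset Strict Implicit. Unset Printing Implicit Defensive.
Import GRing.Theory.
Local Open Scope ring_scope.

(* A finite simple graph on the vertex set 'I_n = {x_0,...,x_(n-1)} is given by
   a symmetric irreflexive relation e : rel 'I_n (hypotheses in the theorem). *)

Section GGamma.
Variables (n : nat) (e : rel 'I_n).

(* non-adjacent pairs (i,j) with i < j : they index the generators y_{i,j} *)
Definition nadj (p : 'I_n * 'I_n) : bool := ((p.1 < p.2)%N && ~~ e p.1 p.2).
Definition Ypair := {p : 'I_n * 'I_n | nadj p}.

(* Concrete normal-form model of G_Gamma: the element
     x_0^(z 0) x_1^(z 1) ... x_(n-1)^(z (n-1)) * prod_p y_p^(t p)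
   is represented by the pair (z, t).  With [a,b] = a^-1 b^-1 a b one has
   x_j x_i = x_i x_j y_{i,j} (i<j, non-adjacent), x_j x_i = x_i x_j otherwise,
   y central; hence the multiplication below. *)
Definition GG := ({ffun 'I_n -> int} * {ffun Ypair -> int})%type.

Definition gmul (a b : GG) : GG :=
  ([ffun v => a.1 v + b.1 v],
   [ffun p : Ypair => a.2 p + b.2 p + a.1 (val p).2 * b.1 (val p).1]).

Definition is_aut (phi : GG -> GG) : Prop :=
  bijective phi /\ forall a b, phi (gmul a b) = gmul (phi a) (phi b).

(* H = G_{Gamma(A)} gamma_2(G_Gamma): elements whose x-exponents vanish off A *)
Definition Hsub (A : {set 'I_n}) (g : GG) : Prop :=
  forall v, v \notin A -> g.1 v = 0.

Definition img (phi : GG -> GG) (S : GG -> Prop) (g : GG) : Prop :=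
  exists h, S h /\ phi h = g.

Definition V1 : {set 'I_n} := [set x | [exists y, e x y]].

Definition e1 : rel 'I_n := fun x y => [&& e x y, x \in V1 & y \in V1].

Definition comps : {set {set 'I_n}} :=
  [set [set y | connect e1 x y] | x in V1].

Definition gcomp (i : 'I_#|comps|) : {set 'I_n} := enum_val i.

Definition graph_iso (A B : {set 'I_n}) : Prop :=
  exists f : 'I_n -> 'I_n,
    {in A &, injective f} /\ f @: A = B /\
    {in A &, forall x y, e (f x) (f y) = e x y}.

End GGamma.

Arguments gcomp {n} e i.
Arguments Hsub {n} e A g.
Arguments img {n e} phi S g.
Arguments comps {n} e.
Arguments graph_iso {n} e A B.

(* Main.v *)
Require Import Defs.
From mathcomp Require Import all_boot all_order all_algebra all_fingroup.
Set Implicit Arguments. Unset Strict Implicit. Unset Printing Implicit Defensive.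
Import GRing.Theory.

Section Additive.
Local Open Scope ring_scope.
Variables (U V : zmodType) (f : U -> V).
Hypothesis fD : forall x y, f (x + y) = f x + f y.

Lemma addf0 : f 0 = 0.
Proof. by apply: (@addrI _ (f 0)); rewrite -fD !addr0. Qed.

Lemma addfN x : f (- x) = - f x.
Proof. by apply: (@addrI _ (f x)); rewrite -fD !subrr addf0. Qed.

Lemma addfMn x m : f (x *+ m) = f x *+ m.
Proof. by elim: m => [|m IH]; rewrite ?mulr0n ?addf0 // !mulrS fD IH. Qed.

Lemma addfMz x k : f (x *~ k) = f x *~ k.
Proof.
case: k => m; first by rewrite -!pmulrn addfMn.
by rewrite NegzE !mulrNz addfN -!pmulrn addfMn.
Qed.

Lemma addf_sum (I : Type) (r : seq I) (P : pred I) (F : I -> U) :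
  f (\sum_(i <- r | P i) F i) = \sum_(i <- r | P i) f (F i).
Proof. exact: (big_morph f fD addf0). Qed.
End Additive.

Section Basis.
Local Open Scope ring_scope.
Variable (T : finType).
Definition dl (v : T) : {ffun T -> int} := [ffun x => ((x == v) : int)].

Lemma dlE v x : dl v x = ((x == v) : int).
Proof. by rewrite ffunE. Qed.

Lemma dl_eq v : dl v v = 1.
Proof. by rewrite dlE eqxx. Qed.

Lemma dl_neq v x : x != v -> dl v x = 0.
Proof. by move=> h; rewrite dlE (negbTE h). Qed.

Lemma decomp (z : {ffun T -> int}) : z = \sum_v dl v *~ z v.
Proof.
apply/ffunP => x; rewrite sum_ffunE (bigD1 x) //= big1 ?addr0.
  by rewrite ffunMzE dlE eqxx mulrzz mul1r.
by move=> y /negbTE ny; rewrite ffunMzE dlE eq_sym ny mulrzz mul0r.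
Qed.

Lemma addf_coord (U : zmodType) (f : {ffun T -> int} -> U)
  (fD : forall x y, f (x + y) = f x + f y) z :
  f z = \sum_v f (dl v) *~ z v.
Proof.
rewrite {1}(decomp z) addf_sum //; apply: eq_bigr => v _.
by rewrite addfMz.
Qed.
End Basis.


Section Group.
Local Open Scope ring_scope.
Variables (n : nat) (e : rel 'I_n).
Hypothesis esym : symmetric e.

Definition vec := {ffun 'I_n -> int}.
Definition comm (u w : vec) : Prop :=
  forall i j, ~~ e i j -> i != j -> u j * w i = w j * u i.

Lemma comm_sym u w : comm u w -> comm w u.
Proof. by move=> h i j nij dij; rewrite h. Qed.

Lemma comm_refl u : comm u u.
Proof. by move=> i j _ _; rewrite mulrC. Qed.

Lemma comm_lin u w1 w2 c1 c2 : comm u w1 -> comm u w2 ->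
  comm u [ffun x => c1 * w1 x + c2 * w2 x].
Proof.
move=> h1 h2 i j nij dij; rewrite !ffunE.
rewrite mulrDr mulrDl; congr (_ + _).
  by rewrite mulrCA h1 // mulrA.
by rewrite mulrCA h2 // mulrA.
Qed.

Lemma comm_gmul (a b : GG e) : comm a.1 b.1 -> gmul a b = gmul b a.
Proof.
move=> h; rewrite /gmul; congr (_, _); apply/ffunP => x; rewrite !ffunE.
  by rewrite addrC.
case: x => [[i j] H] /=; have /andP [lij nij] := H.
by rewrite h // ?[b.2 _ + _]addrC // neq_ltn lij.
Qed.

Lemma gmul_comm (a b : GG e) : gmul a b = gmul b a -> comm a.1 b.1.
Proof.
move=> h.
have key : forall i j : 'I_n, (i < j)%N -> ~~ e i j -> a.1 j * b.1 i = b.1 j * a.1 i.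
  move=> i j lij nij.
  have Hp : nadj e (i, j) by rewrite /nadj /= lij.
  have := congr1 (fun x : GG e => x.2 (exist _ (i, j) Hp : Ypair e)) h.
  rewrite /gmul /= !ffunE /= [b.2 _ + _]addrC.
  by move/addrI.
move=> i j nij dij; case: (ltngtP i j) => [lij|lji|eij].
- exact: key.
- by rewrite [LHS]mulrC [RHS]mulrC key // esym.
- by move: dij; rewrite (val_inj eij) eqxx.
Qed.
End Group.


Section Aut.
Local Open Scope ring_scope.
Variables (n : nat) (e : rel 'I_n).
Hypothesis esym : symmetric e.
Variable phi : GG e -> GG e.
Hypothesis hom : forall a b, phi (gmul a b) = gmul (phi a) (phi b).

Definition FF (a : GG e) : vec n := (phi a).1.
Definition ff (z : vec n) : vec n := FF (z, 0).

Lemma FFM a b : FF (gmul a b) = FF a + FF b.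
Proof. by rewrite /FF hom /gmul /=; apply/ffunP => x; rewrite !ffunE. Qed.

Lemma FFdl (p : Ypair e) : FF (0, dl p) = 0.
Proof.
case: p => [[i j] H]; have /andP [lij nij] := H.
pose xv (k : 'I_n) : GG e := (dl k, 0).
have E : gmul (xv j) (xv i) = gmul (0, dl (exist _ (i, j) H : Ypair e)) (gmul (xv i) (xv j)).
  rewrite /gmul /xv /=; congr (_, _); apply/ffunP => x; rewrite ?ffunE.
  idtac.
    by rewrite add0r addrC.
  case: x => [[a b] Hab] /=; have /andP [lab _] := Hab.
  rewrite ?ffunE ?dlE ?add0r ?addr0 ?mul0r ?addr0 /=.
  have -> : ((exist _ (a, b) Hab : Ypair e) == exist _ (i, j) H) = (a == i) && (b == j).
    by rewrite -val_eqE /= xpair_eqE.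
  have -> : ((b == i) : int) * ((a == j) : int) = 0.
    case: eqP => [bi|]; case: eqP => [aj|] //; rewrite ?mulr0 ?mul0r //.
    by move: lab lij; rewrite /= bi aj => l1 l2; move: (ltn_trans l1 l2); rewrite ltnn.
  by rewrite addr0; case: (a == i); case: (b == j).
have := congr1 FF E; rewrite !FFM => h.
apply: (@addIr _ (FF (xv j) + FF (xv i))); rewrite add0r {2}h.
by rewrite [FF (xv i) + _]addrC.
Qed.

Lemma FFY t : FF (0, t) = 0.
Proof.
pose G (t : {ffun Ypair e -> int}) := FF (0, t).
have GD : forall x y, G (x + y) = G x + G y.
  move=> x y; rewrite /G -FFM /gmul /=; congr (FF (_, _)); apply/ffunP => q;
  by rewrite !ffunE ?mul0r ?addr0.
rewrite -/(G t) (addf_coord GD) big1 // => p _.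
by rewrite /G FFdl mul0rz.
Qed.

Lemma FFfst a : FF a = ff a.1.
Proof.
have E : a = gmul (a.1, 0) (0, a.2).
  rewrite /gmul; case: a => a1 a2; congr (_, _); apply/ffunP => x.
  all: rewrite ?ffunE /= ?ffunE ?addr0 ?add0r ?mulr0 ?mul0r //.
  by match goal with |- _ = ?y + _ => change (y = y + (0:int)); rewrite addr0 end.
by rewrite {1}E FFM FFY addr0.
Qed.

Lemma ffD x y : ff (x + y) = ff x + ff y.
Proof.
rewrite {2 3}/ff -FFM FFfst; apply: congr1; apply/ffunP => v.
by rewrite /gmul /= ?ffunE /=.
Qed.

Lemma ffC u w : comm e u w -> comm e (ff u) (ff w).
Proof.
move=> h; apply: gmul_comm => //.
by rewrite -!hom; congr phi; apply: comm_gmul.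
Qed.
End Aut.


Section Lin.
Local Open Scope ring_scope.
Variables (n : nat) (e : rel 'I_n).
Hypotheses (esym : symmetric e) (eirr : irreflexive e).
Variables (f g : vec n -> vec n).
Hypotheses (fD : forall x y, f (x + y) = f x + f y)
           (gD : forall x y, g (x + y) = g x + g y)
           (fK : cancel f g) (gK : cancel g f)
           (fC : forall u w, comm e u w -> comm e (f u) (f w))
           (gC : forall u w, comm e u w -> comm e (g u) (g w)).

Definition av (v : 'I_n) : vec n := f (dl v).

Lemma coordf z p : f z p = \sum_v z v * av v p.
Proof.
rewrite (addf_coord fD) sum_ffunE; apply: eq_bigr => v _.
by rewrite ffunMzE mulrzz mulrC.
Qed.

Lemma comm_dl v w : e v w -> comm e (dl v) (dl w).
Proof.
move=> evw i j nij dij; rewrite !dlE.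
have [jv|jv] := eqVneq j v; have [iw|iw] := eqVneq i w;
  have [jw|jw] := eqVneq j w; have [iv|iv] := eqVneq i v;
  rewrite ?mulr0 ?mul0r ?mulr1 //; subst.
all: try by rewrite eqxx in dij.
all: try by rewrite esym evw in nij.
all: try by rewrite evw in nij.
all: by move: evw; rewrite eirr.
Qed.

Lemma g_comb v w (c1 c2 : int) :
  g [ffun x => c1 * av v x + c2 * av w x] = [ffun x => c1 * dl v x + c2 * dl w x].
Proof.
have -> : [ffun x => c1 * av v x + c2 * av w x] = av v *~ c1 + av w *~ c2.
  by apply/ffunP => x; rewrite !ffunE !ffunMzE !mulrzz mulrC [c2 * _]mulrC.
rewrite gD !(addfMz gD) /av !fK; apply/ffunP => x.
by rewrite !ffunE !ffunMzE !mulrzz !dlE mulrC [_ * c2]mulrC.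
Qed.

Lemma comm_pair_dl (y : vec n) v w (c1 c2 : int) : e v w -> c1 != 0 ->
  comm e y [ffun x => c1 * dl v x + c2 * dl w x] -> comm e y (dl v).
Proof.
move=> evw c10 cy.
have vw : v != w by apply: contraTneq evw => ->; rewrite eirr.
have H : forall j, ~~ e v j -> j != v -> y j = 0.
  move=> j nvj jv; have := cy v j nvj; rewrite eq_sym jv => /(_ isT).
  rewrite !ffunE ?dlE eqxx (negbTE vw) (negbTE jv).
  have -> : (j == w) = false by apply: contraNF nvj => /eqP ->.
  rewrite !mulr0 !addr0 mul0r mulr1 => /eqP; rewrite mulf_eq0 (negbTE c10) orbF.
  by move/eqP.
move=> i j nij dij.
have [jv|jv] := eqVneq j v.
  subst j; rewrite dl_eq (dl_neq dij) (H i) ?mulr0 ?mul0r //.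
  by rewrite esym.
have [iv|iv] := eqVneq i v.
  by subst i; rewrite dl_eq (dl_neq jv) (H j) // ?mul0r ?mulr0.
by rewrite (dl_neq jv) (dl_neq iv) mulr0 mul0r.
Qed.

Lemma KL v w p q : e v w -> av v p != 0 -> av w q != 0 -> p != q -> e p q.
Proof.
move=> evw avp awq pq; apply/negPn/negP => npq.
have cvw : comm e (av v) (av w) by apply: fC; apply: comm_dl.
have E := cvw p q npq pq.
have avq : av v q != 0.
  apply: contraNneq (mulf_neq0 awq avp) => h; by rewrite -E h mul0r.
have awp : av w p != 0.
  apply: contraNneq (mulf_neq0 awq avp) => h; by rewrite -E h mulr0.
pose u : vec n := [ffun x => av w p * av v x + (- av v p) * av w x].
have cu : comm e (av v) u by apply: comm_lin; [apply: comm_refl|].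
have up : u p = 0 by rewrite ffunE mulNr mulrC subrr.
have supp : forall j, ~~ e p j -> j != p -> u j = 0.
  move=> j npj jp; have := cu p j npj; rewrite eq_sym jp => /(_ isT).
  rewrite up mulr0 => /eqP; rewrite eq_sym mulf_eq0 (negbTE avp) orbF.
  by move/eqP.
have cpu : comm e (dl p) u.
  move=> i j nij dij.
  have [jp|jp] := eqVneq j p.
    subst j; rewrite dl_eq (dl_neq dij) (supp i) ?mulr0 ?mul0r //.
    by rewrite esym.
  have [ip|ip] := eqVneq i p.
    by subst i; rewrite dl_eq (dl_neq jp) (supp j) // ?mul0r ?mulr0.
  by rewrite (dl_neq jp) (dl_neq ip) mulr0 mul0r.
have := gC cpu; rewrite /u g_comb => /comm_pair_dl => /(_ evw awp) /fC.
rewrite gK -/(av v) => h.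
have := h p q npq pq.
have qp : q != p by rewrite eq_sym.
rewrite dl_eq (dl_neq qp) mul0r mulr1 => /eqP.
by rewrite eq_sym (negbTE avq).
Qed.

Lemma coord_gen (h : vec n -> vec n) (hD : forall x y, h (x + y) = h x + h y) z p :
  h z p = \sum_v z v * h (dl v) p.
Proof.
rewrite (addf_coord hD) sum_ffunE; apply: eq_bigr => v _.
by rewrite ffunMzE mulrzz mulrC.
Qed.

Lemma av_neq0 v : av v != 0.
Proof.
apply/negP => /eqP h.
have := congr1 (fun z => g z v) h; rewrite /av fK (addf0 gD) dl_eq ffunE.
by move/eqP; rewrite oner_eq0.
Qed.

Lemma supp_ex v : exists p, av v p != 0.
Proof.
case: (boolP [exists p, av v p != 0]) => [/existsP //|/existsPn h].
by case/negP: (av_neq0 v); apply/eqP/ffunP => p; rewrite ffunE; move/negPn/eqP: (h p).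
Qed.

Lemma e1sym : symmetric (e1 e).
Proof. by move=> x y; rewrite /e1 esym [(x \in _) && _]andbC. Qed.

Lemma e_e1 x y : e x y -> e1 e x y.
Proof.
move=> exy; rewrite /e1 exy !inE /=; apply/andP; split; apply/existsP.
  by exists y.
by exists x; rewrite esym.
Qed.

Lemma edge_V1 v w p : e v w -> av v p != 0 -> p \in V1 e.
Proof.
move=> evw avp.
have vw : v != w by apply: contraTneq evw => ->; rewrite eirr.
have inV : forall q, e p q -> p \in V1 e.
  by move=> q epq; rewrite inE; apply/existsP; exists q.
have [q awq] := supp_ex w.
have [qp|qp] := eqVneq q p; last first.
  by apply: (inV q); apply: KL evw avp awq _; rewrite eq_sym.
subst q.
case: (boolP [exists r, (r != p) && ((av v r != 0) || (av w r != 0))]).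
  case/existsP => r /andP [rp /orP [avr|awr]].
    by apply: (inV r); rewrite esym; apply: KL evw avr awq rp.
  by apply: (inV r); apply: KL evw avp awr _; rewrite eq_sym.
move/existsPn => hr.
have z : forall r, r != p -> av v r = 0 /\ av w r = 0.
  move=> r rp; move: (hr r); rewrite rp /= negb_or !negbK.
  by case/andP => /eqP -> /eqP ->.
pose u : vec n := [ffun x => av w p * av v x + (- av v p) * av w x].
have u0 : u = 0.
  apply/ffunP => x; rewrite !ffunE.
  have [->|xp] := eqVneq x p; first by rewrite mulNr mulrC subrr.
  by case: (z x xp) => -> ->; rewrite !mulr0 addr0.
have := congr1 (fun y => g y v) u0; rewrite /u g_comb (addf0 gD) !ffunE.
rewrite eqxx (negbTE vw) mulr1 mulr0 addr0 => /eqP.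
by rewrite (negbTE awq).
Qed.

Lemma edge_conn v w p q : e v w -> av v p != 0 -> av w q != 0 ->
  connect (e1 e) p q.
Proof.
move=> evw avp awq.
have [->|pq] := eqVneq p q; first exact: connect0.
by apply: connect1; apply: e_e1; apply: KL evw avp awq pq.
Qed.

Lemma supp_V1 v p : v \in V1 e -> av v p != 0 -> p \in V1 e.
Proof.
by rewrite inE => /existsP [y evy] avp; apply: edge_V1 evy avp.
Qed.

Lemma path_conn v w : v \in V1 e -> connect (e1 e) v w ->
  forall p q, av v p != 0 -> av w q != 0 -> connect (e1 e) p q.
Proof.
move=> vV /connectP [s pth ->] {w}.
elim: s v vV pth => [|x s IH] v vV /= pth p q avp avq.
  move: vV; rewrite inE => /existsP [y evy].
  have [r ayr] := supp_ex y.
  apply: (connect_trans (edge_conn evy avp ayr)).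
  by rewrite (sym_connect_sym e1sym); apply: edge_conn evy avq ayr.
case/andP: pth => e1vx pth.
have [r axr] := supp_ex x.
have evx : e v x by case/and3P: e1vx.
have xV : x \in V1 e by case/and3P: e1vx.
apply: (connect_trans (edge_conn evx avp axr)); exact: (IH x xV pth r q axr avq).
Qed.

Lemma gcompP (i : 'I_#|comps e|) :
  exists2 x, x \in V1 e & gcomp e i = [set y | connect (e1 e) x y].
Proof.
have := enum_valP i; rewrite /gcomp => /imsetP [x xV ->]; by exists x.
Qed.

Lemma conn_V1 x y : connect (e1 e) x y -> x \in V1 e -> y \in V1 e.
Proof.
move/connectP => [s pth ->] {y}; elim: s x pth => [|z s IH] x //= /andP [exz pth] _.
by apply: (IH z pth); case/and3P: exz.
Qed.

Lemma gcomp_V1 i y : y \in gcomp e i -> y \in V1 e.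
Proof. by have [x xV ->] := gcompP i; rewrite inE => /conn_V1; apply. Qed.

Lemma gcomp_ex i : exists x, x \in gcomp e i.
Proof. by have [x xV ->] := gcompP i; exists x; rewrite inE connect0. Qed.

Lemma comp_eq i j x : x \in gcomp e i -> x \in gcomp e j -> i = j.
Proof.
have cs := sym_connect_sym e1sym.
have [x1 _ E1] := gcompP i; have [x2 _ E2] := gcompP j.
rewrite E1 E2 !inE => c1 c2.
have Eij : gcomp e i = gcomp e j.
  rewrite E1 E2; apply/setP => y; rewrite !inE; apply/idP/idP => h.
    by apply: (connect_trans c2); apply: (connect_trans _ h); rewrite cs.
  by apply: (connect_trans c1); apply: (connect_trans _ h); rewrite cs.
by apply: enum_val_inj; exact: Eij.
Qed.

Definition goodw (h : 'I_n -> vec n) (i j : 'I_#|comps e|) : bool :=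
  [forall v in gcomp e i, forall p, (h v p != 0) ==> (p \in gcomp e j)].

Lemma goodwP h i j v p : goodw h i j -> v \in gcomp e i -> h v p != 0 -> p \in gcomp e j.
Proof. by move=> /forall_inP /(_ v) H vi hvp; move/forallP/(_ p)/implyP: (H vi); apply. Qed.

Lemma good_ex i : exists j, goodw av i j.
Proof.
have [x xV Ei] := gcompP i.
have [p0 axp] := supp_ex x.
have p0V : p0 \in V1 e := supp_V1 xV axp.
have Cin : [set y | connect (e1 e) p0 y] \in comps e by apply: imset_f.
exists (enum_rank_in Cin [set y | connect (e1 e) p0 y]).
apply/forall_inP => v vi; apply/forallP => p; apply/implyP => avp.
rewrite /gcomp enum_rankK_in // inE.
by apply: (path_conn xV _ axp avp); move: vi; rewrite Ei inE.
Qed.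

Definition sg (i : 'I_#|comps e|) : 'I_#|comps e| := odflt i [pick j | goodw av i j].

Lemma sgP i : goodw av i (sg i).
Proof.
rewrite /sg; case: pickP => [j //|none].
by have [j gj] := good_ex i; move: (none j); rewrite gj.
Qed.

Definition bv (p : 'I_n) : vec n := g (dl p).

Lemma compose i j i' : goodw av i j -> goodw bv j i' -> i = i'.
Proof.
move=> gij gji.
have [x xi] := gcomp_ex i.
have : (g (av x)) x != 0 by rewrite /av fK dl_eq oner_eq0.
rewrite (coord_gen gD) => /eqP nz.
case: (boolP [exists p, av x p * g (dl p) x != 0]); last first.
  move/existsPn => h; case: nz; rewrite big1 // => p _.
  by apply/eqP; rewrite -[_ == 0]negbK h.
case/existsP => p hp.
have avp : av x p != 0 by apply: contraNneq hp => ->; rewrite mul0r.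
have bpx : bv p x != 0 by apply: contraNneq hp => h; rewrite /bv in h; rewrite h mulr0.
have pj := goodwP gij xi avp.
have xi' := goodwP gji pj bpx.
exact: comp_eq xi xi'.
Qed.


End Lin.


Section Transv.
Local Open Scope ring_scope.

Lemma transv (m m' : nat) (M : 'M[rat]_(m, m')) (N : 'M[rat]_(m', m)) :
  M *m N = 1%:M -> N *m M = 1%:M ->
  m = m' /\ exists h : 'I_m -> 'I_m', injective h /\ forall i, M i (h i) != 0.
Proof.
move=> MN NM.
have le1 : (m <= m')%N.
  by rewrite -(mxrank1 rat m) -MN; apply: leq_trans (mxrankM_maxl _ _) (rank_leq_col _).
have le2 : (m' <= m)%N.
  by rewrite -(mxrank1 rat m') -NM; apply: leq_trans (mxrankM_maxl _ _) (rank_leq_col _).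
have E : m' = m by apply/eqP; rewrite eqn_leq le1 le2.
subst m'; split => //.
have [uM _] := mulmx1_unit MN.
have dM : \det M != 0 by rewrite -unitfE -unitmxE.
case: (boolP [exists s : 'S_m, \prod_i M i (s i) != 0]).
  case/existsP => s hs; exists s; split; first exact: perm_inj.
  by move=> i; move/prodf_neq0: hs; apply.
move/existsPn => h; case/negP: dM; apply/eqP.
rewrite /determinant big1 // => s _.
by move: (h s); rewrite negbK => /eqP ->; rewrite mulr0.
Qed.

Variable n : nat.

Lemma transv_sets (C C' : {set 'I_n}) (A B : 'I_n -> 'I_n -> int) x0 :
  x0 \in C ->
  (forall v x, v \in C -> x \in C -> \sum_(p in C') A v p * B p x = ((v == x) : int)) ->
  (forall p y, p \in C' -> y \in C' -> \sum_(v in C) B p v * A v y = ((p == y) : int)) ->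
  exists pi : 'I_n -> 'I_n,
    [/\ {in C &, injective pi}, pi @: C = C' & {in C, forall v, A v (pi v) != 0}].
Proof.
move=> x0C h1 h2.
pose M : 'M[rat]_(#|C|, #|C'|) := \matrix_(i, j) (A (enum_val i) (enum_val j))%:~R.
pose N : 'M[rat]_(#|C'|, #|C|) := \matrix_(j, i) (B (enum_val j) (enum_val i))%:~R.
have MN : M *m N = 1%:M.
  apply/matrixP => i k; rewrite !mxE.
  have -> : \sum_j M i j * N j k = (\sum_(p in C') A (enum_val i) p * B p (enum_val k))%:~R.
    rewrite rmorph_sum [RHS]big_enum_val; apply: eq_bigr => j _.
    by rewrite !mxE -intrM.
  by rewrite h1 ?enum_valP // (inj_eq enum_val_inj); case: (i == k).
have NM : N *m M = 1%:M.
  apply/matrixP => i k; rewrite !mxE.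
  have -> : \sum_j N i j * M j k = (\sum_(v in C) B (enum_val i) v * A v (enum_val k))%:~R.
    rewrite rmorph_sum [RHS]big_enum_val; apply: eq_bigr => j _.
    by rewrite !mxE -intrM.
  by rewrite h2 ?enum_valP // (inj_eq enum_val_inj); case: (i == k).
have [Ecard [h [hinj hM]]] := transv MN NM.
exists (fun v => enum_val (h (enum_rank_in x0C v))); split.
- move=> v w vC wC /enum_val_inj /hinj /(congr1 enum_val).
  by rewrite !enum_rankK_in.
- apply/eqP; rewrite eqEcard; apply/andP; split.
    by apply/subsetP => y /imsetP [v _ ->]; apply: enum_valP.
  rewrite card_in_imset -?Ecard //.
  move=> v w vC wC /enum_val_inj /hinj /(congr1 enum_val).
  by rewrite !enum_rankK_in.
- move=> v vC; move: (hM (enum_rank_in x0C v)); rewrite mxE enum_rankK_in //.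
  by rewrite intr_eq0.
Qed.
End Transv.


Section Main.
Local Open Scope ring_scope.
Variables (n : nat) (e : rel 'I_n).
Hypotheses (esym : symmetric e) (eirr : irreflexive e).
Variables (f g : vec n -> vec n).
Hypotheses (fD : forall x y, f (x + y) = f x + f y)
           (gD : forall x y, g (x + y) = g x + g y)
           (fK : cancel f g) (gK : cancel g f)
           (fC : forall u w, comm e u w -> comm e (f u) (f w))
           (gC : forall u w, comm e u w -> comm e (g u) (g w)).

Let s1 := sg (e:=e) f.
Let s2 := sg (e:=e) g.

Lemma s21 i : s2 (s1 i) = i.
Proof.
by symmetry; apply: (compose esym gD fK (sgP esym eirr gD fK gK fC gC i)
  (sgP esym eirr fD gK fK gC fC (s1 i))).
Qed.

Lemma sum_restr (h : 'I_n -> vec n) (k : 'I_n -> 'I_n -> int) (i j : 'I_#|comps e|) (v x : 'I_n) :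
  goodw (e:=e) h i j -> v \in gcomp e i ->
  \sum_p h v p * k p x = \sum_(p in gcomp e j) h v p * k p x.
Proof.
move=> gd vi; rewrite [RHS]big_mkcond /=; apply: eq_bigr => p _.
case: ifP => // pj; have : h v p == 0.
  by apply: contraFT pj => hp; apply: goodwP gd vi hp.
by move/eqP ->; rewrite mul0r.
Qed.

Lemma iso_part i : graph_iso e (gcomp e i) (gcomp e (s1 i)).
Proof.
set C := gcomp e i; set C' := gcomp e (s1 i).
have g1 : goodw (e:=e) (av f) i (s1 i) := sgP esym eirr gD fK gK fC gC i.
have g2 : goodw (e:=e) (av g) (s1 i) i.
  by rewrite -{2}(s21 i); exact: (sgP esym eirr fD gK fK gC fC (s1 i)).
have [x0 x0C] := gcomp_ex i; have [y0 y0C] := gcomp_ex (s1 i).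
have h1 : forall v x, v \in C -> x \in C ->
    \sum_(p in C') av f v p * av g p x = ((v == x) : int).
  move=> v x vC xC; rewrite -(sum_restr (fun p x => av g p x) x g1 vC).
  have := coord_gen gD (av f v) x; rewrite /av fK => <-.
  by rewrite dlE eq_sym.
have h2 : forall p y, p \in C' -> y \in C' ->
    \sum_(v in C) av g p v * av f v y = ((p == y) : int).
  move=> p y pC yC; rewrite -(sum_restr (fun v y => av f v y) y g2 pC).
  have := coord_gen fD (av g p) y; rewrite /av gK => <-.
  by rewrite dlE eq_sym.
have [pi [piinj piim piA]] := transv_sets x0C h1 h2.
have [rho [rhoinj rhoim rhoA]] := transv_sets y0C h2 h1.
have pie : {in C &, forall v w, e v w -> e (pi v) (pi w)}.
  move=> v w vC wC evw.
  apply: (KL esym eirr gD fK gK fC gC evw (piA v vC) (piA w wC)).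
  apply/eqP => /(piinj v w vC wC) vw; by move: evw; rewrite vw eirr.
have rhoe : {in C' &, forall v w, e v w -> e (rho v) (rho w)}.
  move=> v w vC wC evw.
  apply: (KL esym eirr fD gK fK gC fC evw (rhoA v vC) (rhoA w wC)).
  apply/eqP => /(rhoinj v w vC wC) vw; by move: evw; rewrite vw eirr.
pose ES (D : {set 'I_n}) := [set xy : 'I_n * 'I_n | [&& xy.1 \in D, xy.2 \in D & e xy.1 xy.2]].
pose P2 (h : 'I_n -> 'I_n) (xy : 'I_n * 'I_n) := (h xy.1, h xy.2).
have P2inj : forall (h : 'I_n -> 'I_n) (D : {set 'I_n}), {in D &, injective h} -> {in ES D &, injective (P2 h)}.
  move=> h D hinj [x1 y1] [x2 y2]; rewrite !inE /= => /and3P [x1D y1D _] /and3P [x2D y2D _].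
  by case=> /hinj -> // /hinj ->.
have P2sub : forall (h : 'I_n -> 'I_n) (D D' : {set 'I_n}), h @: D = D' ->
    {in D &, forall v w, e v w -> e (h v) (h w)} -> P2 h @: ES D \subset ES D'.
  move=> h D D' him he; apply/subsetP => _ /imsetP [[x y] + ->].
  rewrite !inE /= => /and3P [xD yD exy]; rewrite -him !imset_f //=.
  exact: he.
have c1 : (#|ES C| <= #|ES C'|)%N.
  by rewrite -(card_in_imset (P2inj _ _ piinj)); apply: subset_leq_card; apply: P2sub.
have c2 : (#|ES C'| <= #|ES C|)%N.
  by rewrite -(card_in_imset (P2inj _ _ rhoinj)); apply: subset_leq_card; apply: P2sub.
have EE : P2 pi @: ES C = ES C'.
  apply/eqP; rewrite eqEcard P2sub // card_in_imset //; exact: P2inj.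
exists pi; split => //; split => //.
move=> x y xC yC; apply/idP/idP; last exact: pie.
move=> exy; have : (pi x, pi y) \in ES C'.
  by rewrite inE /= exy -piim !imset_f.
rewrite -EE => /imsetP [[x' y'] + [ex ey]].
rewrite inE /= => /and3P [x'C y'C ex'y'].
by rewrite (piinj _ _ xC x'C ex) (piinj _ _ yC y'C ey).
Qed.
End Main.

Unset Implicit Arguments.

Theorem corollary6p2 (n : nat) (e : rel 'I_n)
  (esym : symmetric e) (eirr : irreflexive e)
  (phi : GG e -> GG e) (hphi : is_aut phi) :
  exists! s : {perm 'I_#|comps e|},
    forall i : 'I_#|comps e|,
      (forall g, img phi (Hsub e (gcomp e i)) g <-> Hsub e (gcomp e (s i)) g) /\
      graph_iso e (gcomp e i) (gcomp e (s i)).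
Proof.
case: hphi => [[psi phiK psiK] hom].
have homp : forall a b, psi (gmul a b) = gmul (psi a) (psi b).
  by move=> a b; apply: (can_inj phiK); rewrite hom !psiK.
pose f := ff phi; pose g := ff psi.
have fD := ffD hom; have gD := ffD homp.
have fK : cancel f g.
  move=> z; rewrite /f /g; have := FFfst homp (phi (z, 0%R)).
  by rewrite {1}/FF phiK /= => E; rewrite {2}E.
have gK : cancel g f.
  move=> z; rewrite /f /g; have := FFfst hom (psi (z, 0%R)).
  by rewrite {1}/FF psiK /= => E; rewrite {2}E.
have fC := ffC esym hom; have gC := ffC esym homp.
have g1 := sgP esym eirr gD fK gK fC gC.
have g2 := sgP esym eirr fD gK fK gC fC.
have s21 := s21 esym eirr fD gD fK gK fC gC.
have s1inj : injective (sg (e:=e) f) := can_inj s21.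
have partI : forall i g0, img phi (Hsub e (gcomp e i)) g0 <-> Hsub e (gcomp e (sg f i)) g0.
  move=> i g0; split.
  - case=> h [hH <-] v vC'.
    rewrite -/(FF phi h) (FFfst hom) (coord_gen fD) big1 // => x _.
    case: (boolP (x \in gcomp e i)) => xi; last by rewrite hH // mul0r.
    suff -> : f (dl x) v = 0 by rewrite mulr0.
    apply/eqP; apply: contraNT vC' => hv; exact: (goodwP (g1 i) xi hv).
  - move=> H; exists (psi g0); split; last by rewrite psiK.
    move=> v vC; rewrite -/(FF psi g0) (FFfst homp) (coord_gen gD) big1 // => p _.
    case: (boolP (p \in gcomp e (sg f i))) => pi; last by rewrite H // mul0r.
    suff -> : g (dl p) v = 0 by rewrite mulr0.
    apply/eqP; apply: contraNT vC => hv; have := goodwP (g2 (sg f i)) pi hv.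
    by rewrite s21.
exists (perm s1inj); split.
  move=> i; rewrite permE; split; first exact: partI.
  exact: (iso_part esym eirr fD gD fK gK fC gC).
move=> s' Hs'; apply/permP => i; rewrite permE.
have [x xC] := gcomp_ex (sg f i).
pose g0 : GG e := (dl x, 0%R).
have H1 : Hsub e (gcomp e (sg f i)) g0.
  by move=> v vn; rewrite /= dl_neq //; apply: contraNneq vn => ->.
have H2 : Hsub e (gcomp e (s' i)) g0 by apply/(Hs' i).1/partI.
have xi' : x \in gcomp e (s' i).
  apply: contraT => xn; have := H2 x xn; rewrite /= dl_eq => /eqP.
  by rewrite oner_eq0.
exact: (comp_eq esym xC xi').
Qed.
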